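(* Consider the algebraic Riccati operator $$\mathscr R(X)=A^{\mathsf T}XE+E^{\mathsf T}XA+C^{\mathsf T}C-E^{\mathsf T}XBH^{-1}B^{\mathsf T}XE,$$ and let $X_1,\dots,X_n$ ($n\ge2$), with residual factors $R_1,\dots,R_n\in\mathbb{R}^{d\times r}$, inner factor $T$, increments $V_i$ and $\tilde Y_i$ ($i=2,\dots,n$) and shifts $\sigma_1,\dots,\sigma_{n-1}<0$, be generated by the RADI iteration described in the context. Let $\gamma_1,\dots,\gamma_n\in\mathbb{R}$ with $\sum_{i=1}^n\gamma_i=1$ (in particular, the RRE weights), and let $\widehat X=\sum_{i=1}^n\gamma_iX_i$. Then $\operatorname{range}(\mathscr R(\widehat X))\subseteq\operatorname{range}([\,R_1\ R_2\ \cdots\ R_n\,])$, and $$\mathscr R(\widehat X)=[\,R_1\ \cdots\ R_n\,]\,\mathscr H_n\,[\,R_1\ \cdots\ R_n\,]^{\mathsf T},$$ where $\mathscr H_n=\mathscr H_n(\gamma_1,\dots,\gamma_n)$ is the symmetric $nr\times nr$ matrix defined recursively as follows. For $n=2$, $$\mathscr H_2(\gamma_1,\gamma_2)=\begin{bmatrix}\gamma_1^2T+(\gamma_2-\gamma_2^2)\tilde Y_2 & (\gamma_2-\gamma_2^2)(T-\tilde Y_2)\\ (\gamma_2-\gamma_2^2)(T-\tilde Y_2) & \gamma_2^2T+(\gamma_2-\gamma_2^2)\tilde Y_2\end{bmatrix}.$$ For $n\ge3$, $\mathscr H_n=\mathscr A_n+\mathscr B_n+\mathscr C_n$, where $$\mathscr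 A_n=\operatorname{blkdiag}\big(\mathscr H_{n-1}(\gamma_1,\dots,\gamma_{n-2},\gamma_{n-1}+\gamma_n),\ 0_{r\times r}\big),$$ $$\mathscr B_n=\operatorname{blkdiag}\Big(0_{(n-2)r\times(n-2)r},\ \begin{bmatrix}(\gamma_n^2-2\gamma_n)T+(\gamma_n-\gamma_n^2)\tilde Y_n & (\gamma_n-\gamma_n^2)(T-\tilde Y_n)\\ (\gamma_n-\gamma_n^2)(T-\tilde Y_n) & \gamma_n^2T+(\gamma_n-\gamma_n^2)\tilde Y_n\end{bmatrix}\Big),$$ and $\mathscr C_n=\widetilde{\mathscr C}_n+\widetilde{\mathscr C}_n^{\mathsf T}$ with $$\widetilde{\mathscr C}_n=\begin{bmatrix}0_{(n-1)r\times(n-2)r} & M_n^d-M_n^t & M_n^t-M_n^d\\ 0_{r\times(n-2)r} & 0_{r\times r} & 0_{r\times r}\end{bmatrix},$$ where $M_n\in\mathbb{R}^{(n-2)r\times r}$ is the block column whose $i$-th block ($i=2,\dots,n-1$) is $\beta_{ni}\alpha_{in}C_{in}$, $M_n^d=\begin{bmatrix}M_n\\ 0_{r\times r}\end{bmatrix}$, $M_n^t=\begin{bmatrix}0_{r\times r}\\ M_n\end{bmatrix}$, and $$\alpha_{in}=\frac{1}{2\sqrt{\sigma_{i-1}\sigma_{n-1}}},\qquad \beta_{ni}=\gamma_n\sum_{j=1}^{i-1}\gamma_j,\qquad C_{in}=V_i^{\mathsf T}BH^{-1}B^{\mathsf T}V_n\in\mathbb{R}^{r\times r}.$$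
   Context: Data: $A,E\in\mathbb{R}^{d\times d}$, $B\in\mathbb{R}^{d\times p}$, $C\in\mathbb{R}^{q\times d}$, $H\in\mathbb{R}^{p\times p}$ symmetric positive definite. RADI iteration (real shifts): start from $X_1=Z_1D_1Z_1^{\mathsf T}$ with residual $\mathscr R(X_1)=R_1TR_1^{\mathsf T}$, where $R_1\in\mathbb{R}^{d\times r}$ and $T=T^{\mathsf T}\in\mathbb{R}^{r\times r}$ (e.g. $R_1=C^{\mathsf T}$, $T=I$ when $X_1=0$); set $V_1:=Z_1$, $\tilde Y_1^{-1}:=D_1$. For $i=1,2,\dots$, choose $\sigma_i<0$ and set $V_{i+1}=\sqrt{-2\sigma_i}\,(A^{\mathsf T}-E^{\mathsf T}X_iBH^{-1}B^{\mathsf T}+\sigma_iE^{\mathsf T})^{-1}R_iT\in\mathbb{R}^{d\times r}$, $\tilde Y_{i+1}=T-\frac{1}{2\sigma_i}(V_{i+1}^{\mathsf T}B)H^{-1}(V_{i+1}^{\mathsf T}B)^{\mathsf T}$, $\tilde D_{i+1}=\tilde Y_{i+1}^{-1}$, $X_{i+1}=X_i+V_{i+1}\tilde D_{i+1}V_{i+1}^{\mathsf T}$ (so $X_k=\sum_{i=1}^kV_i\tilde Y_i^{-1}V_i^{\mathsf T}$), and $R_{i+1}=R_i+\sqrt{-2\sigma_i}\,E^{\mathsf T}V_{i+1}\tilde D_{i+1}$. All inverses are assumed to exist. Along the iteration $\mathscr R(X_i)=R_iTR_i^{\mathsf T}$ holds with the same inner factor $T$ for all $i$. *)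

(* Defs.v *)
From HB Require Import structures.
From mathcomp Require Import all_boot all_order all_algebra.
Set Implicit Arguments. Unset Strict Implicit. Unset Printing Implicit Defensive.
Import Order.TTheory GRing.Theory Num.Theory.
Local Open Scope ring_scope.

Definition spd (R : realFieldType) (p : nat) (H : 'M[R]_p) : Prop :=
  H^T = H /\ forall x : 'cV[R]_p, x != 0 -> 0 < (x^T *m H *m x) ord0 ord0.

Definition riccati (R : fieldType) (d p q : nat)
  (A E : 'M[R]_d) (B : 'M[R]_(d, p)) (C : 'M[R]_(q, d)) (H : 'M[R]_p)
  (X : 'M[R]_d) : 'M[R]_d :=
  A^T *m X *m E + E^T *m X *m A + C^T *m C
  - E^T *m X *m B *m invmx H *m B^T *m X *m E.

(* range(M) <= range(N) (column spaces), via row spaces of the transposes. *)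
Definition col_range_sub (R : fieldType) (m n1 n2 : nat)
  (M : 'M[R]_(m, n1)) (N : 'M[R]_(m, n2)) : bool := (M^T <= N^T)%MS.

(* The blocks (indexed from 1) of the recursively defined matrix H_n.
   T : inner factor, Yt i : \tilde Y_i, Cc i n : C_{in}, sig i : sigma_i. *)
Section Hn.
Variables (R : rcfType) (r : nat) (T : 'M[R]_r) (Yt : nat -> 'M[R]_r)
          (Cc : nat -> nat -> 'M[R]_r) (sig : nat -> R).

Definition alpha (i n : nat) : R :=
  (2 * Num.sqrt (sig i.-1 * sig n.-1))^-1.

Definition beta (g : nat -> R) (n i : nat) : R :=
  g n * \sum_(1 <= j < i) g j.

Definition Mblk (g : nat -> R) (n i : nat) : 'M[R]_r :=
  if (2 <= i)%N && (i <= n.-1)%N then (beta g n i * alpha i n) *: Cc i n else 0.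

(* k-th block (k = 1..n-1) of M_n^d = [M_n; 0] and M_n^t = [0; M_n] *)
Definition Mdblk (g : nat -> R) (n k : nat) : 'M[R]_r :=
  if (k <= n - 2)%N then Mblk g n k.+1 else 0.
Definition Mtblk (g : nat -> R) (n k : nat) : 'M[R]_r :=
  if (2 <= k)%N then Mblk g n k else 0.

Definition Ctblk (g : nat -> R) (n i j : nat) : 'M[R]_r :=
  if (1 <= i)%N && (i <= n.-1)%N then
    if j == n.-1 then Mdblk g n i - Mtblk g n i
    else if j == n then Mtblk g n i - Mdblk g n i
    else 0
  else 0.

Definition Cblk (g : nat -> R) (n i j : nat) : 'M[R]_r :=
  Ctblk g n i j + (Ctblk g n j i)^T.

Definition Bblk (g : nat -> R) (n i j : nat) : 'M[R]_r :=
  let gn := g n in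
  if (i == n.-1) && (j == n.-1) then (gn ^+ 2 - 2 * gn) *: T + (gn - gn ^+ 2) *: Yt n
  else if ((i == n.-1) && (j == n)) || ((i == n) && (j == n.-1)) then
    (gn - gn ^+ 2) *: (T - Yt n)
  else if (i == n) && (j == n) then gn ^+ 2 *: T + (gn - gn ^+ 2) *: Yt n
  else 0.

Definition H2blk (g : nat -> R) (i j : nat) : 'M[R]_r :=
  let g1 := g 1%N in let g2 := g 2%N in
  if (i == 1%N) && (j == 1%N) then g1 ^+ 2 *: T + (g2 - g2 ^+ 2) *: Yt 2%N
  else if ((i == 1%N) && (j == 2%N)) || ((i == 2%N) && (j == 1%N)) then
    (g2 - g2 ^+ 2) *: (T - Yt 2%N)
  else if (i == 2%N) && (j == 2%N) then g2 ^+ 2 *: T + (g2 - g2 ^+ 2) *: Yt 2%N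
  else 0.

Definition gmerge (g : nat -> R) (n : nat) : nat -> R :=
  fun k => if k == n.-1 then g n.-1 + g n else g k.

Fixpoint Hblk (n : nat) (g : nat -> R) {struct n} : nat -> nat -> 'M[R]_r :=
  match n with
  | 0 | 1 => fun _ _ => 0
  | 2 => H2blk g
  | m.+1 => fun i j =>
      (if (i <= m)%N && (j <= m)%N then Hblk m (gmerge g m.+1) i j else 0)
      + Bblk g m.+1 i j + Cblk g m.+1 i j
  end.

Definition Hmat (n : nat) (g : nat -> R) : 'M[R]_(\sum_(i < n) r) :=
  \mxblock_(i < n, j < n) Hblk n g i.+1 j.+1.

End Hn.

Definition Rcat (R : fieldType) (d r n : nat) (Rs : nat -> 'M[R]_(d, r))
  : 'M[R]_(d, \sum_(j < n) r) := \mxrow_(j < n) Rs j.+1.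

(* Main.v *)
Require Import Defs.
From HB Require Import structures.
From mathcomp Require Import all_boot all_order all_algebra.
From mathcomp Require Import ring lra zify.
Import Order.TTheory GRing.Theory Num.Theory.
Local Open Scope ring_scope.

Lemma scalemxAl' (R : pzRingType) m n k (a : R) (A : 'M[R]_(m, n)) (B : 'M[R]_(n, k)) :
  (a *: A) *m B = a *: (A *m B).
Proof. by rewrite scalemxAl. Qed.
Lemma scalemxAr' (R : comPzRingType) m n k (a : R) (A : 'M[R]_(m, n)) (B : 'M[R]_(n, k)) :
  A *m (a *: B) = a *: (A *m B).
Proof. by rewrite scalemxAr. Qed.
Lemma trmxD' (R : pzRingType) m n (A B : 'M[R]_(m, n)) : (A + B)^T = A^T + B^T.
Proof. exact: linearD. Qed.
Lemma trmxB' (R : pzRingType) m n (A B : 'M[R]_(m, n)) : (A - B)^T = A^T - B^T.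
Proof. exact: linearB. Qed.
Lemma trmxN' (R : pzRingType) m n (A : 'M[R]_(m, n)) : (- A)^T = - A^T.
Proof. exact: linearN. Qed.
Lemma trmxZ' (R : pzRingType) m n (a : R) (A : 'M[R]_(m, n)) : (a *: A)^T = a *: A^T.
Proof. exact: linearZ. Qed.

Ltac mxnorm := rewrite ?(mulmxDl, mulmxDr, mulmxBl, mulmxBr, mulmxN, mulNmx,
  scalemxAl', scalemxAr', trmxD', trmxB', trmxN', trmxZ', trmx_mul, trmxK,
  mul0mx, mulmx0, trmx0, mulmxA).
Ltac mxring := apply/matrixP => ? ?; rewrite !mxE; ring.

Lemma ric_add_gen (R : comNzRingType) d (A E G CC Y D : 'M[R]_d) :
  Y^T = Y -> D^T = D -> G^T = G ->
  A^T *m (Y + D) *m E + E^T *m (Y + D) *m A + CC - E^T *m (Y + D) *m G *m (Y + D) *m E =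
  (A^T *m Y *m E + E^T *m Y *m A + CC - E^T *m Y *m G *m Y *m E)
  + ((A^T - E^T *m Y *m G) *m D *m E + ((A^T - E^T *m Y *m G) *m D *m E)^T)
  - E^T *m D *m G *m D *m E.
Proof.
move=> hY hD hG.
rewrite !trmx_mul linearB /= !trmx_mul !trmxK hY hD hG.
mxnorm. mxring.
Qed.

Lemma blockE (R : fieldType) (d r n : nat) (Rs : nat -> 'M[R]_(d, r))
  (Hb : nat -> nat -> 'M[R]_r) :
  Rcat n Rs *m (\mxblock_(i < n, j < n) Hb i.+1 j.+1) *m (Rcat n Rs)^T =
  \sum_(1 <= i < n.+1) \sum_(1 <= j < n.+1) Rs i *m Hb i j *m (Rs j)^T.
Proof.
rewrite /Rcat mul_mxrow_mxblock tr_mxrow mul_mxrow_mxcol.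
rewrite exchange_big /= big_add1 /= big_mkord; apply: eq_bigr => j _.
rewrite big_add1 /= big_mkord mulmx_suml; apply: eq_bigr => i _.
by [].
Qed.

Lemma Hblk2 (R : rcfType) r T Yt Cc sig g :
  @Hblk R r T Yt Cc sig 2 g = H2blk T Yt g.
Proof. by []. Qed.
Lemma HblkS (R : rcfType) r T Yt Cc sig m g i j :
  @Hblk R r T Yt Cc sig m.+3 g i j =
  (if (i <= m.+2)%N && (j <= m.+2)%N then Hblk T Yt Cc sig m.+2 (gmerge g m.+3) i j else 0)
      + Bblk T Yt g m.+3 i j + Cblk Cc sig g m.+3 i j.
Proof. by []. Qed.

Lemma trmx_sum' (R : pzRingType) m n (I : Type) (rr : seq I) (P : pred I) (F : I -> 'M[R]_(m, n)) :
  (\sum_(i <- rr | P i) F i)^T = \sum_(i <- rr | P i) (F i)^T.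
Proof. by apply: big_morph; [exact: trmxD' | exact: trmx0]. Qed.

Lemma sum12 (V : zmodType) (f : nat -> V) : \sum_(1 <= i < 3) f i = f 1%N + f 2%N.
Proof. by rewrite big_ltn // big_nat1. Qed.

Lemma H2E (R : rcfType) r (T : 'M[R]_r) Yt g :
  [/\ H2blk T Yt g 1 1 = g 1%N ^+ 2 *: T + (g 2%N - g 2%N ^+ 2) *: Yt 2%N,
      H2blk T Yt g 1 2 = (g 2%N - g 2%N ^+ 2) *: (T - Yt 2%N),
      H2blk T Yt g 2 1 = (g 2%N - g 2%N ^+ 2) *: (T - Yt 2%N) &
      H2blk T Yt g 2 2 = g 2%N ^+ 2 *: T + (g 2%N - g 2%N ^+ 2) *: Yt 2%N].
Proof. by []. Qed.

Lemma sum_recr (V : zmodType) (f : nat -> V) k :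
  \sum_(1 <= i < k.+2) f i = \sum_(1 <= i < k.+1) f i + f k.+1.
Proof. by rewrite big_nat_recr. Qed.

Lemma twopt (V : zmodType) (f : nat -> V) k :
  (forall j, (j < k.+1)%N -> f j = 0) ->
  \sum_(1 <= j < k.+3) f j = f k.+1 + f k.+2.
Proof.
move=> hf; rewrite big_nat_recr // big_nat_recr //= big_nat_cond big1 ?add0r //.
by move=> j /andP [/andP [_ hj] _]; apply: hf.
Qed.

Lemma tele (R : comNzRingType) d r (M : nat -> 'M[R]_r) (Rs : nat -> 'M[R]_(d, r)) k :
  \sum_(1 <= i < k.+1) Rs i *m (M i.+1 - M i) =
  Rs k *m M k.+1 - Rs 0%N *m M 1%N + \sum_(1 <= j < k.+1) (Rs j.-1 - Rs j) *m M j.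
Proof.
elim: k => [|k IH]; first by rewrite !big_geq // subrr addr0.
rewrite (big_nat_recr k.+1) // (big_nat_recr k.+1) //= IH.
move: (\sum_(1 <= j < k.+1) _) => S.
rewrite !mulmxBr !mulmxBl.
move: (Rs k.+1 *m M k.+2) (Rs k.+1 *m M k.+1) (Rs k *m M k.+1) (Rs 0%N *m M 1%N) => a b c e.
apply/matrixP => ? ?; rewrite !mxE; ring.
Qed.

Lemma tele2 (R : comNzRingType) d r (M : nat -> 'M[R]_r) (Rs : nat -> 'M[R]_(d, r)) k :
  M 1%N = 0 -> M k.+2 = 0 ->
  \sum_(1 <= i < k.+2) Rs i *m (M i.+1 - M i) =
  - \sum_(2 <= j < k.+2) (Rs j - Rs j.-1) *m M j.
Proof.
move=> h1 h2; rewrite tele h1 h2 !mulmx0 subrr add0r big_ltn // h1 mulmx0 add0r.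
rewrite -sumrN; apply: eq_bigr => j _; by rewrite -mulNmx opprB.
Qed.

Lemma Bblk0 (R : rcfType) r (T : 'M[R]_r) Yt g k i j :
  ((i < k.+1) || (j < k.+1))%N -> Bblk T Yt g k.+2 i j = 0.
Proof.
by case/orP => h; rewrite /Bblk /= ?(ltn_eqF h) ?(ltn_eqF (leq_trans h (leqnSn _))) ?andbF.
Qed.

Lemma Bsum (R : rcfType) d r (T : 'M[R]_r) Yt (g : nat -> R) (Rs : nat -> 'M[R]_(d, r)) k :
  \sum_(1 <= i < k.+3) \sum_(1 <= j < k.+3) Rs i *m Bblk T Yt g k.+2 i j *m (Rs j)^T =
  g k.+2 *: (Rs k.+1 *m T *m (Rs k.+2 - Rs k.+1)^T + (Rs k.+2 - Rs k.+1) *m T *m (Rs k.+1)^T)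
  + (Rs k.+2 - Rs k.+1) *m (g k.+2 ^+ 2 *: T + (g k.+2 - g k.+2 ^+ 2) *: Yt k.+2)
     *m (Rs k.+2 - Rs k.+1)^T.
Proof.
rewrite twopt; last first.
  by move=> i hi; rewrite big1 // => j _; rewrite Bblk0 ?hi // mulmx0 mul0mx.
rewrite !twopt; try by move=> j hj; rewrite Bblk0 ?hj ?orbT // mulmx0 mul0mx.
rewrite /Bblk /= !eqxx ?(ltn_eqF (ltnSn _)) ?(gtn_eqF (ltnSn _)) /=.
move: (g k.+2) => c.
mxnorm. apply/matrixP => ? ?; rewrite !mxE; ring.
Qed.

Section Cpart.
Variables (R : rcfType) (d r : nat) (Cc : nat -> nat -> 'M[R]_r) (sig g : nat -> R)
  (Rs : nat -> 'M[R]_(d, r)).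

Lemma MdE n i : Mdblk Cc sig g n i = Mblk Cc sig g n i.+1.
Proof.
rewrite /Mdblk /Mblk; case: ifP => h; first by [].
case: ifP => // /andP [_ h2]; exfalso; move: h h2; case: n => [|[|n]] //=; lia.
Qed.

Lemma MtE n i : Mtblk Cc sig g n i = Mblk Cc sig g n i.
Proof. by rewrite /Mtblk /Mblk; case: ifP => // ->. Qed.

Lemma Ctsum k :
  \sum_(1 <= i < k.+3) \sum_(1 <= j < k.+3) Rs i *m Ctblk Cc sig g k.+2 i j *m (Rs j)^T =
  \sum_(2 <= j < k.+2) (Rs j - Rs j.-1) *m Mblk Cc sig g k.+2 j *m (Rs k.+2 - Rs k.+1)^T.
Proof.
have hz : forall i j, (j < k.+1)%N -> Ctblk Cc sig g k.+2 i j = 0.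
  move=> i j hj; rewrite /Ctblk /= (ltn_eqF hj) (ltn_eqF (leq_trans hj (leqnSn _))).
  by case: ifP.
rewrite big_nat_recr //= [X in _ + X = _]big1 ?addr0; last first.
  move=> j _; rewrite /Ctblk; case: ifP; last by rewrite mulmx0 mul0mx.
  by move=> /andP [_] /=; lia.
transitivity (\sum_(1 <= i < k.+2) Rs i *m (Mblk Cc sig g k.+2 i.+1 - Mblk Cc sig g k.+2 i)
   *m (Rs k.+1 - Rs k.+2)^T).
  apply: eq_big_nat => i /andP [h1 h2].
  rewrite twopt; last by move=> j hj; rewrite hz // mulmx0 mul0mx.
  rewrite /Ctblk /= h1 -ltnS h2 /= eqxx (gtn_eqF (ltnSn _)) eqxx MdE MtE.
  move: (Mblk _ _ _ _ i.+1) (Mblk _ _ _ _ i) => a b.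
  mxnorm. mxring.
rewrite -mulmx_suml tele2; last first.
- by rewrite /Mblk ltnn andbF.
- by [].
rewrite mulNmx -mulmxN -linearN /= opprB mulmx_suml.
by [].
Qed.
Lemma Csum k :
  \sum_(1 <= i < k.+3) \sum_(1 <= j < k.+3) Rs i *m Cblk Cc sig g k.+2 i j *m (Rs j)^T =
  \sum_(1 <= i < k.+3) \sum_(1 <= j < k.+3) Rs i *m Ctblk Cc sig g k.+2 i j *m (Rs j)^T +
  (\sum_(1 <= i < k.+3) \sum_(1 <= j < k.+3) Rs i *m Ctblk Cc sig g k.+2 i j *m (Rs j)^T)^T.
Proof.
rewrite /Cblk.
transitivity (\sum_(1 <= i < k.+3) \sum_(1 <= j < k.+3) Rs i *m Ctblk Cc sig g k.+2 i j *m (Rs j)^T +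
  \sum_(1 <= i < k.+3) \sum_(1 <= j < k.+3) Rs i *m (Ctblk Cc sig g k.+2 j i)^T *m (Rs j)^T).
  rewrite -big_split; apply: eq_bigr => i _; rewrite -big_split; apply: eq_bigr => j _.
  by rewrite mulmxDr mulmxDl.
congr (_ + _).
rewrite [RHS]trmx_sum'; under [RHS]eq_bigr do rewrite trmx_sum'.
rewrite [RHS]exchange_big_nat; apply: eq_bigr => i _; apply: eq_bigr => j _.
by rewrite !trmx_mul trmxK mulmxA.
Qed.
End Cpart.

Lemma H2sym (R : rcfType) r (T : 'M[R]_r) Yt g i j :
  T^T = T -> (Yt 2%N)^T = Yt 2%N -> (H2blk T Yt g i j)^T = H2blk T Yt g j i.
Proof.
move=> hT hY; rewrite /H2blk.
case: (i == 1%N); case: (j == 1%N); case: (i == 2%N); case: (j == 2%N) => /=;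
  by rewrite ?trmx0 ?trmxD' ?trmxZ' ?trmxB' ?hT ?hY.
Qed.

Lemma Bsym (R : rcfType) r (T : 'M[R]_r) Yt g m i j :
  T^T = T -> (Yt m)^T = Yt m -> (Bblk T Yt g m i j)^T = Bblk T Yt g m j i.
Proof.
move=> hT hY; rewrite /Bblk.
case: (i == m.-1); case: (j == m.-1); case: (i == m); case: (j == m) => /=;
  by rewrite ?trmx0 ?trmxD' ?trmxZ' ?trmxB' ?hT ?hY.
Qed.

Lemma Hsym (R : rcfType) r (T : 'M[R]_r) Yt Cc sig m :
  T^T = T -> (forall i, (2 <= i <= m)%N -> (Yt i)^T = Yt i) ->
  forall g i j, (Hblk T Yt Cc sig m g i j)^T = Hblk T Yt Cc sig m g j i.
Proof.
move=> hT; elim: m => [|m IH] hY g i j; first by rewrite /= trmx0.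
case: m IH hY => [|[|m]] IH hY.
- by rewrite /= trmx0.
- by rewrite Hblk2 H2sym // hY.
rewrite !HblkS !trmxD' Bsym ?hY //; last by rewrite leqnn.
rewrite /Cblk trmxK [X in _ + X = _]addrC; congr (_ + _ + _).
rewrite andbC; case: ifP => _; last by rewrite trmx0.
apply: IH => l /andP [h1 h2]; apply: hY; rewrite h1 /=; exact: leq_trans h2 _.
Qed.


Section Main.
Variables (R : rcfType) (d p q r n : nat)
  (A E : 'M[R]_d) (B : 'M[R]_(d, p)) (C : 'M[R]_(q, d)) (H : 'M[R]_p)
  (T : 'M[R]_r) (X : nat -> 'M[R]_d) (Rs : nat -> 'M[R]_(d, r)) (V : nat -> 'M[R]_(d, r))
  (Yt : nat -> 'M[R]_r) (sig : nat -> R).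
Variable G : 'M[R]_d.
Hypothesis hG : G = B *m invmx H *m B^T.
Hypothesis HHs : H^T = H.
Hypothesis HT : T^T = T.
Hypothesis HX1 : (X 1%N)^T = X 1%N.
Hypothesis Hit : forall i, (1 <= i <= n.-1)%N ->
     sig i < 0 /\
         A^T - E^T *m X i *m B *m invmx H *m B^T + sig i *: E^T \in unitmx /\
         V i.+1 = Num.sqrt (- 2 * sig i) *:
                  (invmx (A^T - E^T *m X i *m B *m invmx H *m B^T + sig i *: E^T)
                   *m Rs i *m T) /\
         Yt i.+1 = T - (2 * sig i)^-1 *:
                   ((V i.+1)^T *m B *m invmx H *m ((V i.+1)^T *m B)^T) /\
         Yt i.+1 \in unitmx /\
         X i.+1 = X i + V i.+1 *m invmx (Yt i.+1) *m (V i.+1)^T /\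
         Rs i.+1 = Rs i + Num.sqrt (- 2 * sig i) *: (E^T *m V i.+1 *m invmx (Yt i.+1)).

Definition ricG (Y : 'M[R]_d) :=
  A^T *m Y *m E + E^T *m Y *m A + C^T *m C - E^T *m Y *m G *m Y *m E.
Definition W i := V i *m invmx (Yt i) *m (V i)^T.
Definition s i := Num.sqrt (- 2 * sig i).

Lemma riccatiE Y : riccati A E B C H Y = ricG Y.
Proof. by rewrite /riccati /ricG hG !mulmxA. Qed.

Lemma Gsym : G^T = G.
Proof. by rewrite hG !trmx_mul trmxK trmx_inv HHs !mulmxA. Qed.

Section Idx.
Variable j : nat.
Hypothesis Hj : (1 <= j <= n.-1)%N.

Lemma sig_lt0 : sig j < 0. Proof. by case: (Hit j Hj). Qed.
Lemma sig_neq0 : sig j != 0. Proof. exact: ltr0_neq0 sig_lt0. Qed.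
Lemma s_gt0 : 0 < s j.
Proof. have := sig_lt0; rewrite /s sqrtr_gt0; lra. Qed.
Lemma s_neq0 : s j != 0. Proof. by rewrite gt_eqF // s_gt0. Qed.
Lemma s_sq : s j ^+ 2 = - 2 * sig j.
Proof. have h := sig_lt0; rewrite /s sqr_sqrtr //. lra. Qed.

Lemma Ysym : (Yt j.+1)^T = Yt j.+1.
Proof.
have [_ [_ [_ [-> _]]]] := Hit j Hj.
by rewrite linearB /= linearZ /= HT !trmx_mul !trmxK trmx_inv HHs !mulmxA.
Qed.
Lemma Yunit : Yt j.+1 \in unitmx. Proof. by case: (Hit j Hj) => _ [_ [_ [_ []]]]. Qed.
Lemma Yisym : (invmx (Yt j.+1))^T = invmx (Yt j.+1).
Proof. by rewrite trmx_inv Ysym. Qed.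
Lemma Wsym : (W j.+1)^T = W j.+1.
Proof. by rewrite /W !trmx_mul trmxK Yisym mulmxA. Qed.
Lemma XS : X j.+1 = X j + W j.+1.
Proof. by case: (Hit j Hj) => _ [_ [_ [_ [_ []]]]]. Qed.

Lemma F1 : E^T *m V j.+1 *m invmx (Yt j.+1) = (s j)^-1 *: (Rs j.+1 - Rs j).
Proof.
have [_ [_ [_ [_ [_ [_ ->]]]]]] := Hit j Hj.
by rewrite addrC addKr scalerA mulVf ?s_neq0 // scale1r.
Qed.

Lemma F2 : (A^T - E^T *m X j *m G) *m V j.+1 =
  s j *: (Rs j *m T) - sig j *: (E^T *m V j.+1).
Proof.
have [_ [hu [hV _]]] := Hit j Hj.
set K := A^T - _ + _ in hu hV.
have -> : A^T - E^T *m X j *m G = K - sig j *: E^T by rewrite /K addrK hG !mulmxA.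
rewrite mulmxBl -scalemxAl; congr (_ - _).
by rewrite hV -scalemxAr !mulmxA mulmxV // mul1mx.
Qed.

Lemma F3 : (V j.+1)^T *m G *m V j.+1 = (2 * sig j) *: (T - Yt j.+1).
Proof.
have [_ [_ [_ [hY _]]]] := Hit j Hj.
rewrite hY opprB addrC subrK scalerA mulfV ?scale1r; last by rewrite mulf_neq0 ?sig_neq0 ?pnatr_eq0.
by rewrite hG trmx_mul trmxK !mulmxA.
Qed.

Let D := Rs j.+1 - Rs j.

Lemma hsig : sig j = - (s j ^+ 2) / 2.
Proof. by rewrite s_sq; field. Qed.

Lemma hPt : invmx (Yt j.+1) *m ((V j.+1)^T *m E) = ((s j)^-1 *: D)^T.
Proof. by rewrite -F1 !trmx_mul trmxK Yisym. Qed.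
Lemma hEV : E^T *m V j.+1 = ((s j)^-1 *: D) *m Yt j.+1.
Proof. by rewrite -F1 mulmxKV // Yunit. Qed.
Lemma hEW : E^T *m W j.+1 = ((s j)^-1 *: D) *m (V j.+1)^T.
Proof. by rewrite /W !mulmxA F1. Qed.
Lemma hWE : W j.+1 *m E = V j.+1 *m ((s j)^-1 *: D)^T.
Proof. by rewrite /W -!mulmxA hPt. Qed.

Lemma K1 : (A^T - E^T *m X j *m G) *m W j.+1 *m E =
  Rs j *m T *m D^T + (1/2) *: (D *m Yt j.+1 *m D^T).
Proof.
set M := A^T - _.
rewrite -mulmxA hWE mulmxA /M F2 hEV !linearZ /=.
rewrite /D; mxnorm. rewrite hsig. apply/matrixP => ? ?; rewrite !mxE. field. exact: s_neq0.
Qed.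

Lemma K2 : E^T *m W j.+1 *m G *m W j.+1 *m E = - (D *m (T - Yt j.+1) *m D^T).
Proof.
rewrite -mulmxA hWE mulmxA hEW.
have hPV : ((s j)^-1 *: D) *m (V j.+1)^T *m G *m V j.+1 =
   ((s j)^-1 *: D) *m ((2 * sig j) *: (T - Yt j.+1)) by rewrite -F3 !mulmxA.
rewrite hPV /D; mxnorm; rewrite hsig.
apply/matrixP => ? ?; rewrite !mxE. field. exact: s_neq0.
Qed.

Lemma step Z g : Z^T = Z -> (X j)^T = X j ->
  ricG (X j - Z + g *: W j.+1) = ricG (X j - Z) +
   (g *: (Rs j *m T *m D^T + D *m T *m (Rs j)^T)
    + D *m (g ^+ 2 *: T + (g - g ^+ 2) *: Yt j.+1) *m D^T)
   + (g *: (E^T *m Z *m G *m W j.+1 *m E) + (g *: (E^T *m Z *m G *m W j.+1 *m E))^T).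
Proof.
move=> hZ hX.
have hsym : (X j - Z)^T = X j - Z by rewrite trmxB' hX hZ.
have hWs : (g *: W j.+1)^T = g *: W j.+1 by rewrite trmxZ' Wsym.
rewrite {1}/ricG ric_add_gen //; last exact: Gsym.
rewrite -/(ricG (X j - Z)).
have eS : (A^T - E^T *m (X j - Z) *m G) *m (g *: W j.+1) *m E =
   g *: ((A^T - E^T *m X j *m G) *m W j.+1 *m E) + g *: (E^T *m Z *m G *m W j.+1 *m E).
  by mxnorm; mxring.
have eQ : E^T *m (g *: W j.+1) *m G *m (g *: W j.+1) *m E =
   (g * g) *: (E^T *m W j.+1 *m G *m W j.+1 *m E).
  by rewrite !(scalemxAl', scalemxAr') scalerA.
rewrite eS eQ K1 K2.
move: (E^T *m Z *m G *m W j.+1 *m E) => U.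
rewrite /D; mxnorm; rewrite ?HT ?Ysym.
apply/matrixP => ? ?; rewrite !mxE. by field.
Qed.

End Idx.
Lemma Xsym j : (j <= n.-1)%N -> (X j.+1)^T = X j.+1.
Proof.
elim: j => [|j IH] hj; first exact: HX1.
have hj' : (1 <= j.+1 <= n.-1)%N by rewrite hj.
by rewrite (XS _ hj') trmxD' IH ?(ltnW hj) // (Wsym _ hj').
Qed.

Lemma dec k (h : nat -> R) : (k <= n.-1)%N ->
  \sum_(1 <= i < k.+2) h i *: X i =
  (\sum_(1 <= i < k.+2) h i) *: X k.+1 - \sum_(2 <= j < k.+2) (\sum_(1 <= i < j) h i) *: W j.
Proof.
elim: k => [|k IH] hk.
  by rewrite !big_nat1 big_geq // subr0.
have hk' : (1 <= k.+1 <= n.-1)%N by rewrite hk.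
rewrite big_nat_recr //= IH ?(ltnW hk) // (XS _ hk').
rewrite (big_nat_recr (k.+2)) //= (big_nat_recr (k.+2) 2) //=.
move: (\sum_(2 <= j < k.+2) _) (\sum_(1 <= i < k.+2) h i) => Z S.
mxnorm. rewrite !scalerDr. mxring.
Qed.

Lemma alphaE i j : (1 <= i <= n.-1)%N -> (1 <= j <= n.-1)%N ->
  alpha sig i.+1 j.+1 = (s i)^-1 * (s j)^-1.
Proof.
move=> hi hj; rewrite /alpha /= -invfM; congr (_^-1).
have h1 := sig_lt0 _ hi; have h2 := sig_lt0 _ hj.
rewrite /s -sqrtrM; last by lra.
have -> : (-2 * sig i) * (-2 * sig j) = 2 ^+ 2 * (sig i * sig j) by ring.
rewrite [RHS]sqrtrM; last by rewrite exprn_ge0. by rewrite sqrtr_sqr ger0_norm.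
Qed.

Lemma cross i j : (1 <= i <= n.-1)%N -> (1 <= j <= n.-1)%N ->
  E^T *m W i.+1 *m G *m W j.+1 *m E =
  alpha sig i.+1 j.+1 *: ((Rs i.+1 - Rs i) *m
     ((V i.+1)^T *m B *m invmx H *m B^T *m V j.+1) *m (Rs j.+1 - Rs j)^T).
Proof.
move=> hi hj.
rewrite -mulmxA (hWE _ hj) mulmxA (hEW _ hi) (alphaE _ _ hi hj).
have -> : (V i.+1)^T *m B *m invmx H *m B^T *m V j.+1 = (V i.+1)^T *m G *m V j.+1
  by rewrite hG !mulmxA.
move: (Rs i.+1 - Rs i) (Rs j.+1 - Rs j) => D1 D2.
mxnorm. mxring.
Qed.

Hypothesis Hres1 : riccati A E B C H (X 1%N) = Rs 1%N *m T *m (Rs 1%N)^T.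

Local Notation Cc := (fun i j => (V i)^T *m B *m invmx H *m B^T *m V j).
Definition Fs m g := \sum_(1 <= i < m.+1) \sum_(1 <= j < m.+1)
   Rs i *m Hblk T Yt Cc sig m g i j *m (Rs j)^T.

Lemma base g : (2 <= n)%N -> \sum_(1 <= i < 3) g i = 1 ->
  Fs 2 g = ricG (\sum_(1 <= i < 3) g i *: X i).
Proof.
move=> hn hg.
have h1 : (1 <= 1 <= n.-1)%N by rewrite /=; lia.
have hg1 : g 1%N = 1 - g 2%N by move: hg; rewrite big_ltn // big_nat1 => <-; rewrite addrK.
have -> : \sum_(1 <= i < 3) g i *: X i = X 1%N - 0 + g 2%N *: W 2%N.
  rewrite big_ltn // big_nat1 (XS _ h1) hg1 subr0.
  move: (X 1%N) (W 2%N) => a b; apply/matrixP => ? ?; rewrite !mxE; ring.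
rewrite (step _ h1) ?trmx0 ?HX1 // subr0 -riccatiE Hres1.
rewrite /Fs Hblk2 !sum12; have [-> -> -> ->] := H2E _ _ T Yt g.
rewrite mulmx0 !mul0mx scaler0 trmx0 !addr0 hg1.
move: (g 2%N) => c. mxnorm. mxring.
Qed.
Lemma Apart k g :
  \sum_(1 <= i < k.+4) \sum_(1 <= j < k.+4) Rs i *m
     (if (i <= k.+2)%N && (j <= k.+2)%N then Hblk T Yt Cc sig k.+2 g i j else 0) *m (Rs j)^T
  = Fs k.+2 g.
Proof.
rewrite /Fs sum_recr [X in _ + X = _]big1 ?addr0; last first.
  by move=> j _; rewrite ltnn mulmx0 mul0mx.
apply: eq_big_nat => i /andP [_ hi].
rewrite sum_recr ltnn andbF mulmx0 mul0mx addr0.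
apply: eq_big_nat => j /andP [_ hj].
by rewrite (hi : (i <= k.+2)%N) (hj : (j <= k.+2)%N).
Qed.

Lemma mainind k : (k.+2 <= n)%N -> forall g, \sum_(1 <= i < k.+3) g i = 1 ->
  Fs k.+2 g = ricG (\sum_(1 <= i < k.+3) g i *: X i).
Proof.
elim: k => [|k IH] hk g hg; first exact: base.
set g' := gmerge g k.+3.
have hg'E : forall i, (i < k.+2)%N -> g' i = g i.
  by move=> i hi; rewrite /g' /gmerge /= (ltn_eqF hi).
have hg'2 : g' k.+2 = g k.+2 + g k.+3 by rewrite /g' /gmerge /= eqxx.
have hsum' : \sum_(1 <= i < k.+3) g' i = 1.
  rewrite big_nat_recr //= hg'2 -hg (big_nat_recr k.+3) //= (big_nat_recr k.+2) //=.
  rewrite addrA; congr (_ + _ + _).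
  by apply: eq_big_nat => i /andP [_ hi]; rewrite hg'E.
have IH' := IH (ltnW hk) g' hsum'.
have hj : (1 <= k.+2 <= n.-1)%N by rewrite /=; lia.
have hk1 : (k.+1 <= n.-1)%N by lia.
have hXs : \sum_(1 <= i < k.+4) g i *: X i =
    \sum_(1 <= i < k.+3) g' i *: X i + g k.+3 *: W k.+3.
  rewrite big_nat_recr //= (big_nat_recr k.+2) //= [in RHS](big_nat_recr k.+2) //= hg'2 (XS _ hj).
  have -> : \sum_(1 <= i < k.+2) g' i *: X i = \sum_(1 <= i < k.+2) g i *: X i.
    by apply: eq_big_nat => i /andP [_ hi]; rewrite hg'E.
  move: (\sum_(1 <= i < k.+2) _) (X k.+2) (W k.+3) => a b c.
  apply/matrixP => ? ?; rewrite !mxE; ring.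
have hdec := dec k.+1 g' hk1.
rewrite hsum' scale1r in hdec.
set Z := \sum_(2 <= j < k.+3) _ in hdec.
have hZ : Z^T = Z.
  rewrite /Z trmx_sum'; apply: eq_big_nat => j /andP [h2 h3].
  case: j h2 h3 => [|j] // h2 h3.
  have hj' : (1 <= j <= n.-1)%N by lia.
  by rewrite trmxZ' (Wsym _ hj').
rewrite hXs hdec (step _ hj) ?(Xsym _ hk1) // -hdec -IH'.
have -> : Fs k.+3 g =
  \sum_(1 <= i < k.+4) \sum_(1 <= j < k.+4) Rs i *m
     (if (i <= k.+2)%N && (j <= k.+2)%N then Hblk T Yt Cc sig k.+2 g' i j else 0) *m (Rs j)^T
  + \sum_(1 <= i < k.+4) \sum_(1 <= j < k.+4) Rs i *m Bblk T Yt g k.+3 i j *m (Rs j)^T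
  + \sum_(1 <= i < k.+4) \sum_(1 <= j < k.+4) Rs i *m Cblk Cc sig g k.+3 i j *m (Rs j)^T.
  rewrite /Fs -!big_split; apply: eq_bigr => i _; rewrite -!big_split; apply: eq_bigr => j _.
  by rewrite HblkS !mulmxDr !mulmxDl.
rewrite Apart Bsum Csum Ctsum; congr (_ + _ + _).
have -> : \sum_(2 <= j < k.+3) (Rs j - Rs j.-1) *m Mblk Cc sig g k.+3 j *m (Rs k.+3 - Rs k.+2)^T =
   g k.+3 *: (E^T *m Z *m G *m W k.+3 *m E).
  rewrite /Z mulmx_sumr !mulmx_suml scaler_sumr.
  apply: eq_big_nat => j /andP [h2 h3].
  case: j h2 h3 => [|j] // h2 h3.
  have hj' : (1 <= j <= n.-1)%N by lia.
  rewrite !(scalemxAl', scalemxAr') scalerA (cross _ _ hj' hj) scalerA.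
  rewrite /Mblk h2 /= (h3 : (j.+1 <= k.+2)%N) /= /beta.
  have -> : \sum_(1 <= i < j.+1) g' i = \sum_(1 <= i < j.+1) g i.
    by apply: eq_big_nat => i /andP [_ hi]; rewrite hg'E //; lia.
  by rewrite scalemxAr' scalemxAl'.
by [].
Qed.

Lemma final g : (2 <= n)%N -> \sum_(1 <= i < n.+1) g i = 1 ->
  let Xhat := \sum_(1 <= i < n.+1) g i *: X i in
  let Rn := Rcat n Rs in
  let Hn := Hmat T Yt (fun i j => (V i)^T *m B *m invmx H *m B^T *m V j) sig n g in
  [/\ Hn^T = Hn,
      col_range_sub (riccati A E B C H Xhat) Rn &
      riccati A E B C H Xhat = Rn *m Hn *m Rn^T].
Proof.
move=> hn hg Xhat Rn Hn.
have hYs : forall i, (2 <= i <= n)%N -> (Yt i)^T = Yt i.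
  move=> [|i] // hi; apply: Ysym; lia.
have hsym : Hn^T = Hn.
  rewrite /Hn /Hmat tr_mxblock; apply: eq_mxblock => i j.
  exact: Hsym.
have heq : riccati A E B C H Xhat = Rn *m Hn *m Rn^T.
  have [k hk] : exists k, n = k.+2 by exists n.-2; lia.
  have hk' : (k.+2 <= n)%N by rewrite hk.
  rewrite riccatiE /Rn /Hn /Hmat blockE /Xhat.
  move: hg; rewrite hk => hg.
  by rewrite -(mainind _ hk' _ hg).
split => //.
by rewrite /col_range_sub heq -mulmxA trmx_mul; exact: submxMl.
Qed.
End Main.

Theorem theorem2 (R : rcfType) (d p q r n : nat)
  (A E : 'M[R]_d) (B : 'M[R]_(d, p)) (C : 'M[R]_(q, d)) (H : 'M[R]_p)
  (T : 'M[R]_r)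
  (X : nat -> 'M[R]_d) (Rs : nat -> 'M[R]_(d, r)) (V : nat -> 'M[R]_(d, r))
  (Yt : nat -> 'M[R]_r) (sig : nat -> R)
  (k : nat) (Z1 : 'M[R]_(d, k)) (D1 : 'M[R]_k)
  (g : nat -> R) :
  spd H ->
  (2 <= n)%N ->
  T^T = T ->
  (* initial data *)
  D1^T = D1 ->
  X 1%N = Z1 *m D1 *m Z1^T ->
  riccati A E B C H (X 1%N) = Rs 1%N *m T *m (Rs 1%N)^T ->
  (* RADI iteration, i = 1, ..., n-1 *)
  (forall i, (1 <= i <= n.-1)%N ->
     sig i < 0 /\
         A^T - E^T *m X i *m B *m invmx H *m B^T + sig i *: E^T \in unitmx /\
         V i.+1 = Num.sqrt (- 2 * sig i) *:
                  (invmx (A^T - E^T *m X i *m B *m invmx H *m B^T + sig i *: E^T)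
                   *m Rs i *m T) /\
         Yt i.+1 = T - (2 * sig i)^-1 *:
                   ((V i.+1)^T *m B *m invmx H *m ((V i.+1)^T *m B)^T) /\
         Yt i.+1 \in unitmx /\
         X i.+1 = X i + V i.+1 *m invmx (Yt i.+1) *m (V i.+1)^T /\
         Rs i.+1 = Rs i + Num.sqrt (- 2 * sig i) *: (E^T *m V i.+1 *m invmx (Yt i.+1))) ->
  (* affine weights *)
  \sum_(1 <= i < n.+1) g i = 1 ->
  let Xhat := \sum_(1 <= i < n.+1) g i *: X i in
  let Rn := Rcat n Rs in
  let Hn := Hmat T Yt (fun i j => (V i)^T *m B *m invmx H *m B^T *m V j) sig n g in
  [/\ Hn^T = Hn,
      col_range_sub (riccati A E B C H Xhat) Rn &
      riccati A E B C H Xhat = Rn *m Hn *m Rn^T].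
Proof.
move=> [hHs _] hn hT hD1 hX1 hres hit hg.
have hX1s : (X 1%N)^T = X 1%N by rewrite hX1 !trmx_mul trmxK hD1 mulmxA.
exact: (final R d p q r n A E B C H T X Rs V Yt sig (B *m invmx H *m B^T) erefl hHs hT hX1s hit hres g hn hg).
Qed.
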